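(* Let $n,m,p,N$ be positive integers, $A\in\mathbb{R}^{n\times n}$, $B\in\mathbb{R}^{n\times m}$, $C\in\mathbb{R}^{p\times n}$, $D\in\mathbb{R}^{p\times p}$ with $DD^T\succ 0$, and let $\mathcal{O}_N,\mathcal{O}_N^R,\mathcal{R}_N,\mathcal{D}_N,\mathcal{H}_N,\mathcal{L}_N,M_N,\tilde\phi_N,S_\Phi^{-1},\mathcal{Q}_\Phi,\Omega_\Phi,W_\Phi$ be as defined in the context. Let $\Phi_1,\Phi_2$ be symmetric $Nn\times Nn$ matrices with $0\preceq \Phi_2\preceq \Phi_1\prec \tilde\phi_N I_{Nn}$. Then $$\Omega_{\Phi_1}\preceq \Omega_{\Phi_2}\qquad\text{and}\qquad W_{\Phi_1}\succeq W_{\Phi_2}.$$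
   Context: $\preceq,\prec$ denote the Loewner order on symmetric matrices; $\lambda_1(\cdot)$ is the largest eigenvalue; $\otimes$ is the Kronecker product. Define the block matrices $\mathcal{R}_N=[\,B\ \ AB\ \cdots\ A^{N-1}B\,]\in\mathbb{R}^{n\times Nm}$, $\mathcal{O}_N=[\,(CA^{N-1})^T\ \cdots\ (CA)^T\ \ C^T\,]^T\in\mathbb{R}^{Np\times n}$, $\mathcal{O}_N^R=[\,(A^{N-1})^T\ \cdots\ A^T\ \ I_n\,]^T\in\mathbb{R}^{Nn\times n}$, $\mathcal{D}_N=I_N\otimes D$. With $H_t=CA^{t-1}B$ and $L_t=A^{t-1}B$ for $t\ge 1$, let $\mathcal{H}_N$ (size $Np\times Nm$) and $\mathcal{L}_N$ (size $Nn\times Nm$) be the block upper-triangular Toeplitz matrices whose $(i,j)$ block ($i,j=1,\dots,N$) is $H_{j-i}$, resp. $L_{j-i}$, for $j>i$ and $0$ for $j\le i$. Let $M_N=\mathcal{L}_N(I_{Nm}+\mathcal{H}_N^T(\mathcal{D}_N\mathcal{D}_N^T)^{-1}\mathcal{H}_N)^{-1}\mathcal{L}_N^T$ and $\tilde\phi_N=1/\lambda_1(M_N)$ (interpreted as $+\infty$ if $M_N=0$). For a symmetric $\Phi$ with $0\preceq\Phi\prec\tilde\phi_N I_{Nn}$ define $S_\Phi=-\Phi^{-1}+M_N$ (for invertible $\Phi$) and its inverse $S_\Phi^{-1}=-\Phi(I_{Nn}-M_N\Phi)^{-1}$ (this formula is used for all such $\Phi$, so that $S_0^{-1}=0$); $\mathcal{Q}_\Phi=[\,I_{Nm}+\mathcal{H}_N^T(\mathcal{D}_N\mathcal{D}_N^T)^{-1}\mathcal{H}_N-\mathcal{L}_N^T\Phi\mathcal{L}_N\,]^{-1}$;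 $\mathcal{J}_N=\mathcal{O}_N^R-\mathcal{L}_N\mathcal{H}_N^T[\mathcal{D}_N\mathcal{D}_N^T+\mathcal{H}_N\mathcal{H}_N^T]^{-1}\mathcal{O}_N$; $\Omega_N=\mathcal{O}_N^T(\mathcal{D}_N\mathcal{D}_N^T+\mathcal{H}_N\mathcal{H}_N^T)^{-1}\mathcal{O}_N$; $\Omega_\Phi=\Omega_N+\mathcal{J}_N^TS_\Phi^{-1}\mathcal{J}_N$ and $W_\Phi=\mathcal{R}_N\mathcal{Q}_\Phi\mathcal{R}_N^T$. *)

(* Defs.v *)
From HB Require Import structures.
From mathcomp Require Import all_boot all_order all_algebra.
From mathcomp Require Import boolp classical_sets reals constructive_ereal.
Set Implicit Arguments. Unset Strict Implicit. Unset Printing Implicit Defensive.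
Import Order.TTheory GRing.Theory Num.Theory.
Local Open Scope ring_scope.

Section Defs.
Variable R : realType.

Definition psdmx k (X : 'M[R]_k) : Prop :=
  X^T = X /\ forall x : 'cV[R]_k, 0 <= (x^T *m X *m x) 0 0.
Definition pdmx k (X : 'M[R]_k) : Prop :=
  X^T = X /\ forall x : 'cV[R]_k, x != 0 -> 0 < (x^T *m X *m x) 0 0.
Definition loewner_le k (Y X : 'M[R]_k) : Prop := psdmx (X - Y).
Definition loewner_lt k (Y X : 'M[R]_k) : Prop := pdmx (X - Y).

Definition lambda1 k (X : 'M[R]_k) : R := sup [set a : R | eigenvalue X a].

Definition loewner_lt_bar k (Y : 'M[R]_k) (phi : \bar R) : Prop :=
  match phi with
  | r%:E => loewner_lt Y r%:M
  | +oo%E => True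
  | -oo%E => False
  end.

Lemma blk_lt N q (k : 'I_(N * q)) : (k %/ q < N)%N.
Proof.
case: q k => [|q] k; first by case: k => i; rewrite muln0.
by rewrite ltn_divLR // ltn_ord.
Qed.
Lemma inblk_lt N q (k : 'I_(N * q)) : (k %% q < q)%N.
Proof.
case: q k => [|q] k; first by case: k => i; rewrite muln0.
by rewrite ltn_mod.
Qed.
Definition blkI N q (k : 'I_(N * q)) : 'I_N := Ordinal (blk_lt k).
Definition inI N q (k : 'I_(N * q)) : 'I_q := Ordinal (inblk_lt k).

Definition blockmx N a b (F : 'I_N -> 'I_N -> 'M[R]_(a, b)) : 'M[R]_(N * a, N * b) :=
  \matrix_(k, l) F (blkI k) (blkI l) (inI k) (inI l).
Definition blockrow N a b (F : 'I_N -> 'M[R]_(a, b)) : 'M[R]_(a, N * b) :=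
  \matrix_(k, l) F (blkI l) k (inI l).
Definition blockcol N a b (F : 'I_N -> 'M[R]_(a, b)) : 'M[R]_(N * a, b) :=
  \matrix_(k, l) F (blkI k) (inI k) l.

Variables (n m p N : nat).
Variables (A : 'M[R]_n) (B : 'M[R]_(n, m)) (C : 'M[R]_(p, n)) (D : 'M[R]_p).

Definition RN : 'M[R]_(n, N * m) := blockrow (fun j : 'I_N => A ^+ j *m B).
Definition ON : 'M[R]_(N * p, n) :=
  blockcol (fun i : 'I_N => C *m A ^+ (N.-1 - i)).
Definition ONR : 'M[R]_(N * n, n) := blockcol (fun i : 'I_N => A ^+ (N.-1 - i)).
Definition DN : 'M[R]_(N * p, N * p) :=
  blockmx (fun i j : 'I_N => if i == j then D else 0).
Definition HN : 'M[R]_(N * p, N * m) :=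
  blockmx (fun i j : 'I_N => if (i < j)%N then C *m A ^+ (j - i).-1 *m B else 0).
Definition LN : 'M[R]_(N * n, N * m) :=
  blockmx (fun i j : 'I_N => if (i < j)%N then A ^+ (j - i).-1 *m B else 0).

Definition DDinv : 'M[R]_(N * p) := invmx (DN *m DN^T).
Definition PN : 'M[R]_(N * m) := 1%:M + HN^T *m DDinv *m HN.
Definition MN : 'M[R]_(N * n) := LN *m invmx PN *m LN^T.
Definition phitN : \bar R :=
  if MN == 0 then +oo%E else ((lambda1 MN)^-1)%:E.

Definition SinvPhi (Phi : 'M[R]_(N * n)) : 'M[R]_(N * n) :=
  - (Phi *m invmx (1%:M - MN *m Phi)).
Definition QPhi (Phi : 'M[R]_(N * n)) : 'M[R]_(N * m) :=
  invmx (PN - LN^T *m Phi *m LN).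
Definition GN : 'M[R]_(N * p) := invmx (DN *m DN^T + HN *m HN^T).
Definition JN : 'M[R]_(N * n, n) := ONR - LN *m HN^T *m GN *m ON.
Definition OmegaN : 'M[R]_n := ON^T *m GN *m ON.
Definition OmegaPhi (Phi : 'M[R]_(N * n)) : 'M[R]_n :=
  OmegaN + JN^T *m SinvPhi Phi *m JN.
Definition WPhi (Phi : 'M[R]_(N * n)) : 'M[R]_n := RN *m QPhi Phi *m RN^T.

End Defs.

(* Main.v *)
Require Import Defs.
From HB Require Import structures.
From mathcomp Require Import all_boot all_order all_algebra.
From mathcomp Require Import boolp classical_sets reals constructive_ereal.
From mathcomp Require Import ring lra.
Set Implicit Arguments. Unset Strict Implicit. Unset Printing Implicit Defensive.
Import Order.TTheory GRing.Theory Num.Theory.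
Local Open Scope ring_scope.

Definition bf (R : realType) a c (X : 'M[R]_(a,c)) (x : 'cV[R]_a) (y : 'cV[R]_c) : R :=
  (x^T *m X *m y) 0 0.

Lemma bfDl (R : realType) a c (X : 'M[R]_(a,c)) x1 x2 y :
  bf X (x1 + x2) y = bf X x1 y + bf X x2 y.
Proof. by rewrite /bf linearD /= !mulmxDl mxE. Qed.
Lemma bfDr (R : realType) a c (X : 'M[R]_(a,c)) x y1 y2 :
  bf X x (y1 + y2) = bf X x y1 + bf X x y2.
Proof. by rewrite /bf !mulmxDr mxE. Qed.
Lemma bfNl (R : realType) a c (X : 'M[R]_(a,c)) x y :
  bf X (- x) y = - bf X x y.
Proof. by rewrite /bf linearN /= !mulNmx mxE. Qed.
Lemma bfNr (R : realType) a c (X : 'M[R]_(a,c)) x y :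
  bf X x (- y) = - bf X x y.
Proof. by rewrite /bf !mulmxN mxE. Qed.
Lemma bfBl (R : realType) a c (X : 'M[R]_(a,c)) x1 x2 y :
  bf X (x1 - x2) y = bf X x1 y - bf X x2 y.
Proof. by rewrite bfDl bfNl. Qed.
Lemma bfBr (R : realType) a c (X : 'M[R]_(a,c)) x y1 y2 :
  bf X x (y1 - y2) = bf X x y1 - bf X x y2.
Proof. by rewrite bfDr bfNr. Qed.
Lemma bfZl (R : realType) a c (X : 'M[R]_(a,c)) t x y :
  bf X (t *: x) y = t * bf X x y.
Proof. by rewrite /bf linearZ /= -!scalemxAl mxE. Qed.
Lemma bfZr (R : realType) a c (X : 'M[R]_(a,c)) t x y :
  bf X x (t *: y) = t * bf X x y.
Proof. by rewrite /bf -!scalemxAr mxE. Qed.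
Lemma bfDm (R : realType) a c (X Y : 'M[R]_(a,c)) x y :
  bf (X + Y) x y = bf X x y + bf Y x y.
Proof. by rewrite /bf mulmxDr mulmxDl mxE. Qed.
Lemma bfNm (R : realType) a c (X : 'M[R]_(a,c)) x y :
  bf (- X) x y = - bf X x y.
Proof. by rewrite /bf mulmxN mulNmx mxE. Qed.
Lemma bfBm (R : realType) a c (X Y : 'M[R]_(a,c)) x y :
  bf (X - Y) x y = bf X x y - bf Y x y.
Proof. by rewrite bfDm bfNm. Qed.
Lemma bf_mull (R : realType) a b c (A : 'M[R]_(a,b)) (X : 'M[R]_(a,c)) x y :
  bf X (A *m x) y = bf (A^T *m X) x y.
Proof. by rewrite /bf trmx_mul !mulmxA. Qed.
Lemma bf_mulr (R : realType) a b c (B : 'M[R]_(c,b)) (X : 'M[R]_(a,c)) x y :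
  bf X x (B *m y) = bf (X *m B) x y.
Proof. by rewrite /bf !mulmxA. Qed.
Lemma bf_tr (R : realType) a c (X : 'M[R]_(a,c)) x y :
  bf X x y = bf X^T y x.
Proof.
rewrite /bf; have -> : forall A : 'M[R]_1, A 0 0 = A^T 0 0 by move=> A; rewrite mxE.
by rewrite !trmx_mul trmxK mulmxA.
Qed.
Lemma bf_sym (R : realType) a (X : 'M[R]_a) x y :
  X^T = X -> bf X x y = bf X y x.
Proof. by move=> sX; rewrite bf_tr sX. Qed.
Lemma bf_scal (R : realType) a (t : R) (x y : 'cV[R]_a) :
  bf t%:M x y = t * bf 1%:M x y.
Proof. by rewrite /bf mul_mx_scalar mulmx1 -scalemxAl mxE. Qed.
Lemma bf1 (R : realType) a (x : 'cV[R]_a) : bf 1%:M x x = \sum_i x i 0 ^+ 2.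
Proof.
rewrite /bf mulmx1 mxE; apply: eq_bigr => i _; by rewrite mxE expr2.
Qed.
Lemma bf1_ge0 (R : realType) a (x : 'cV[R]_a) : 0 <= bf 1%:M x x.
Proof. by rewrite bf1 sumr_ge0 // => i _; rewrite sqr_ge0. Qed.
Lemma bf1_gt0 (R : realType) a (x : 'cV[R]_a) : x != 0 -> 0 < bf 1%:M x x.
Proof.
move=> nz; rewrite lt_neqAle bf1_ge0 andbT; apply/negP => /eqP h.
move/negP: nz; apply; apply/eqP/matrixP => i j; rewrite (ord1 j) mxE.
have : x i 0 ^+ 2 <= 0.
  have := h; rewrite bf1 (bigD1 i) //= => h'.
  have : 0 <= \sum_(l | l != i) x l 0 ^+ 2 by rewrite sumr_ge0 // => l _; rewrite sqr_ge0.
  by move=> hs; lra.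
by rewrite le_eqVlt ltNge sqr_ge0 orbF sqrf_eq0 => /eqP.
Qed.
Definition psdf (R : realType) a (X : 'M[R]_a) := forall v, 0 <= bf X v v.

Lemma inv_sym (R : realType) a (X : 'M[R]_a) : X^T = X -> (invmx X)^T = invmx X.
Proof. by move=> sX; rewrite trmx_inv sX. Qed.

Lemma bf_inv_quad (R : realType) a (X : 'M[R]_a) z : X^T = X -> X \in unitmx ->
  bf X (invmx X *m z) (invmx X *m z) = bf (invmx X) z z.
Proof.
move=> sX uX; rewrite bf_mull bf_mulr inv_sym // -mulmxA mulmxV // mulmx1 //.
Qed.

Lemma var_le (R : realType) a (X : 'M[R]_a) : X^T = X -> X \in unitmx ->
  psdf X -> forall z y, 2 * bf 1%:M y z - bf X y y <= bf (invmx X) z z.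
Proof.
move=> sX uX pX z y; have h := pX (y - invmx X *m z).
rewrite !bfBl !bfBr (@bf_sym _ _ X (invmx X *m z) y sX) bf_inv_quad // in h.
have e : bf X y (invmx X *m z) = bf 1%:M y z by rewrite bf_mulr mulmxV.
rewrite e in h; lra.
Qed.

Lemma var_eq (R : realType) a (X : 'M[R]_a) : X^T = X -> X \in unitmx ->
  forall z, bf (invmx X) z z =
    2 * bf 1%:M (invmx X *m z) z - bf X (invmx X *m z) (invmx X *m z).
Proof.
move=> sX uX z; rewrite bf_inv_quad // bf_mull mulmx1 inv_sym //; lra.
Qed.

Lemma psdf_inv (R : realType) a (X : 'M[R]_a) : X^T = X -> psdf X -> psdf (invmx X).
Proof.
move=> sX pX z; case uX: (X \in unitmx).
  by rewrite -bf_inv_quad.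
by rewrite invmx_out ?inE ?uX.
Qed.

Lemma pd_unit (R : realType) a (X : 'M[R]_a) :
  (forall v, v != 0 -> 0 < bf X v v) -> X \in unitmx.
Proof.
move=> pX; rewrite -row_free_unit -kermx_eq0; apply/negPn/negP => nz.
have [i ni] : exists i, row i (kermx X) != 0.
  case/boolP: [exists i, row i (kermx X) != 0] => [/existsP [j hj]|]; first by exists j.
  rewrite negb_exists => /forallP h; exfalso; move/eqP: nz; apply.
  by apply/row_matrixP => i; rewrite row0; apply/eqP/negPn/h.
have h0 : row i (kermx X) *m X = 0 by apply/sub_kermxP; rewrite row_sub.
have nv : (row i (kermx X))^T != 0.
  by apply: contra ni => /eqP h; rewrite -(trmxK (row i _)) h trmx0.
have := pX _ nv; rewrite /bf trmxK h0 mul0mx mxE ltxx //.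
Qed.
Lemma bf0l (R : realType) a c (X : 'M[R]_(a,c)) y : bf X 0 y = 0.
Proof. by rewrite /bf trmx0 !mul0mx mxE. Qed.

Lemma sq_le_bf1 (R : realType) a (x : 'cV[R]_a) i : x i 0 ^+ 2 <= bf 1%:M x x.
Proof.
rewrite bf1 (bigD1 i) //= lerDl sumr_ge0 // => l _; by rewrite sqr_ge0.
Qed.

Lemma bf_bound (R : realType) a (X : 'M[R]_a) x :
  bf X x x <= (\sum_j \sum_i `|X i j|) * bf 1%:M x x.
Proof.
rewrite {1}/bf mxE mulr_suml; apply: ler_sum => j _.
rewrite mxE !mulr_suml; apply: ler_sum => i _; rewrite mxE.
have hi := sq_le_bf1 x i; have hj := sq_le_bf1 x j.
set s := bf _ x x in hi hj *.
have h1 : `|x i 0| * `|x j 0| <= s.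
  have : 0 <= (`|x i 0| - `|x j 0|) ^+ 2 by rewrite sqr_ge0.
  rewrite -(real_normK (num_real (x i 0))) in hi.
  rewrite -(real_normK (num_real (x j 0))) in hj.
  move=> h2; nra.
apply: le_trans (ler_norm _) _.
rewrite !normrM mulrAC mulrC; apply: ler_wpM2l => //.
Qed.

Lemma spec_bound (R : realType) k (M : 'M[R]_k) : (0 < k)%N -> M^T = M ->
  forall x, bf M x x <= lambda1 M * bf 1%:M x x.
Proof.
move=> k0 sM.
pose Q := [set r : R | exists2 x : 'cV[R]_k, x != 0 & r = bf M x x / bf 1%:M x x]%classic.
pose c := \sum_j \sum_i `|M i j|.
have x0nz : (const_mx 1 : 'cV[R]_k) != 0.
  apply/negP => /eqP/matrixP/(_ (Ordinal k0) 0); rewrite !mxE => /eqP.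
  by rewrite oner_eq0.
pose x1 : 'cV[R]_k := const_mx 1.
have Qne : (Q !=set0)%classic by exists (bf M x1 x1 / bf 1%:M x1 x1), x1.
have Qub : ubound Q c.
  move=> r [x xnz ->]; rewrite ler_pdivrMr ?bf1_gt0 //; exact: bf_bound.
have hQ : has_sup Q by split => //; exists c.
set S := sup Q.
have hS : forall x, bf M x x <= S * bf 1%:M x x.
  move=> x; have [->|xnz] := eqVneq x 0; first by rewrite !bf0l mulr0.
  rewrite -ler_pdivrMr ?bf1_gt0 //; apply: sup_upper_bound => //.
  by exists x.
have eS : eigenvalue M S.
  apply/negP => nE.
  have uMS : (M - S%:M) \in unitmx.
    by rewrite -row_free_unit -kermx_eq0; exact: nE.
  pose T := S%:M - M.
  have uT : T \in unitmx.
    suff h : T *m (- invmx (M - S%:M)) = 1%:M by case: (mulmx1_unit h).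
    by rewrite /T -opprB mulNmx mulmxN opprK mulmxV.
  have sT : T^T = T by rewrite /T linearB /= tr_scalar_mx sM.
  have pT : psdf T by move=> v; rewrite /T bfBm bf_scal; have := hS v; lra.
  pose Ti := invmx T.
  have sTi : Ti^T = Ti by apply: inv_sym.
  have pTi : psdf Ti by apply: psdf_inv.
  have uTi : Ti \in unitmx by rewrite unitmx_inv.
  pose ci := \sum_j \sum_i `|Ti i j| + 1.
  have ci0 : 0 < ci.
    by rewrite /ci ltr_pwDr // sumr_ge0 // => j _; rewrite sumr_ge0.
  set t := ci^-1.
  have t0 : 0 < t by rewrite invr_gt0.
  have tc : t * ci = 1 by rewrite mulVf // gt_eqF.
  have hT : forall x, t * bf 1%:M x x <= bf T x x.
    move=> x; have := var_le sTi uTi pTi x (t *: x).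
    rewrite invmxK bfZl bfZl bfZr.
    have := bf_bound Ti x; have := bf1_ge0 x; have := pTi x.
    rewrite -/ci /ci; set s := bf 1%:M x x; set b := bf Ti x x.
    set e := \sum_j _ => h1 h2 h3 h4.
    have h5 : b <= ci * s by rewrite /ci mulrDl mul1r -/e; lra.
    have h6 : t * (t * b) <= t * s.
      have : t * b <= t * (ci * s) by rewrite ler_wpM2l // ltW.
      have e1 : t * (ci * s) = s by rewrite mulrA tc mul1r.
      by rewrite e1 => h7; rewrite ler_wpM2l // ltW.
    lra.
  have : S <= S - t.
    apply: ge_sup => // r [x xnz ->].
    rewrite ler_pdivrMr ?bf1_gt0 //.
    have := hT x; rewrite /T bfBm bf_scal; lra.
  lra.
pose E := [set a : R | eigenvalue M a]%classic.
have Eub : ubound E S.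
  move=> a /eigenvalueP [v vM vnz].
  have xnz : v^T != 0.
    by apply: contra vnz => /eqP h; rewrite -(trmxK v) h trmx0.
  have := hS v^T; rewrite /bf trmxK vM mulmx1 -scalemxAl mxE.
  have := bf1_gt0 xnz; rewrite /bf trmxK mulmx1 => h1 h2.
  by rewrite -(ler_pM2r h1).
have hE : has_sup E by split; [exists S | exists S].
have SL : S <= lambda1 M by apply: sup_upper_bound.
move=> x; apply: le_trans (hS x) _; apply: ler_wpM2r => //; exact: bf1_ge0.
Qed.
Lemma bf_cong (R : realType) a c (A : 'M[R]_(a,c)) (X : 'M[R]_a) x y :
  bf (A^T *m X *m A) x y = bf X (A *m x) (A *m y).
Proof. by rewrite bf_mull bf_mulr. Qed.

Lemma psdf_cong (R : realType) a c (A : 'M[R]_(a,c)) (X : 'M[R]_a) :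
  psdf X -> psdf (A^T *m X *m A).
Proof. by move=> pX v; rewrite bf_cong. Qed.

Lemma sym_cong (R : realType) a c (A : 'M[R]_(a,c)) (X : 'M[R]_a) :
  X^T = X -> (A^T *m X *m A)^T = A^T *m X *m A.
Proof. by move=> sX; rewrite !trmx_mul trmxK sX mulmxA. Qed.

Lemma invmx_eq (R : realType) a (A B : 'M[R]_a) : A *m B = 1%:M -> invmx A = B.
Proof.
move=> h; have [uA _] := mulmx1_unit h.
by rewrite -[RHS]mul1mx -(mulVmx uA) -mulmxA h mulmx1.
Qed.

Lemma woodbury (R : realType) a b (L : 'M[R]_(a,b)) (P : 'M[R]_b) (Phi : 'M[R]_a) :
  P \in unitmx -> (P - L^T *m Phi *m L) \in unitmx ->
  Phi *m invmx (1%:M - L *m invmx P *m L^T *m Phi) =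
  Phi + Phi *m (L *m (invmx (P - L^T *m Phi *m L) *m (L^T *m Phi))).
Proof.
move=> uP uK; set K := P - _; set U := L^T *m Phi.
set Pi := invmx P; set Ki := invmx K.
have hUL : U *m L = P - K by rewrite /K /U opprB addrC subrK.
have hc : Pi *m (U *m L) *m Ki = Ki - Pi.
  by rewrite hUL mulmxBr mulmxBl mulVmx // mul1mx -mulmxA mulmxV // mulmx1.
have -> : L *m Pi *m L^T *m Phi = L *m (Pi *m U) by rewrite !mulmxA.
have h1 : (1%:M - L *m (Pi *m U)) *m (1%:M + L *m (Ki *m U)) = 1%:M.
  rewrite mulmxDr mulmx1 mulmxBl mul1mx.
  have -> : L *m (Pi *m U) *m (L *m (Ki *m U)) = L *m ((Pi *m (U *m L) *m Ki) *m U).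
    by rewrite !mulmxA.
  rewrite hc mulmxBl mulmxBr.
  by rewrite (addrC (L *m (Ki *m U))) opprB !subrK.
by rewrite (invmx_eq h1) mulmxDr mulmx1.
Qed.

Lemma Fform (R : realType) a b (L : 'M[R]_(a,b)) (P : 'M[R]_b) (Phi : 'M[R]_a) :
  Phi^T = Phi -> P \in unitmx -> (P - L^T *m Phi *m L) \in unitmx ->
  Phi *m invmx (1%:M - L *m invmx P *m L^T *m Phi) =
  Phi + (L^T *m Phi)^T *m invmx (P - L^T *m Phi *m L) *m (L^T *m Phi).
Proof.
move=> sP uP uK; rewrite woodbury //; congr (_ + _).
by rewrite trmx_mul trmxK sP !mulmxA.
Qed.

Lemma Kdef_sym (R : realType) a b (L : 'M[R]_(a,b)) (P : 'M[R]_b) (Phi : 'M[R]_a) :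
  P^T = P -> Phi^T = Phi -> (P - L^T *m Phi *m L)^T = P - L^T *m Phi *m L.
Proof.
move=> sP sPhi; rewrite linearB /= sP.
by have := sym_cong L sPhi => ->.
Qed.

Lemma identE (R : realType) a b (L : 'M[R]_(a,b)) (P : 'M[R]_b) (Phi : 'M[R]_a) x y :
  Phi^T = Phi ->
  bf Phi x x + 2 * bf 1%:M y (L^T *m Phi *m x) - bf (P - L^T *m Phi *m L) y y
  = bf Phi (x + L *m y) (x + L *m y) - bf P y y.
Proof.
move=> sP.
have e1 : bf 1%:M y (L^T *m Phi *m x) = bf Phi (L *m y) x.
  by rewrite bf_mulr mul1mx bf_mull.
have e2 : bf Phi x (L *m y) = bf Phi (L *m y) x by apply: bf_sym.
have e3 : bf (P - L^T *m Phi *m L) y y = bf P y y - bf Phi (L *m y) (L *m y).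
  by rewrite bfBm bf_cong.
rewrite e1 e3 !bfDl !bfDr e2; lra.
Qed.

Definition pdf (R : realType) a (X : 'M[R]_a) := forall v, v != 0 -> 0 < bf X v v.

Lemma pdf_psdf (R : realType) a (X : 'M[R]_a) : pdf X -> psdf X.
Proof.
move=> pX v; have [->|nz] := eqVneq v 0; first by rewrite bf0l.
exact/ltW/pX.
Qed.

Lemma core (R : realType) a b (L : 'M[R]_(a,b)) (P : 'M[R]_b) (Phi1 Phi2 : 'M[R]_a) :
  P^T = P -> pdf P ->
  Phi1^T = Phi1 -> Phi2^T = Phi2 -> psdf (Phi1 - Phi2) ->
  pdf (P - L^T *m Phi1 *m L) ->
  let K1 := P - L^T *m Phi1 *m L in let K2 := P - L^T *m Phi2 *m L in
  let F1 := Phi1 *m invmx (1%:M - L *m invmx P *m L^T *m Phi1) in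
  let F2 := Phi2 *m invmx (1%:M - L *m invmx P *m L^T *m Phi2) in
  [/\ psdf (invmx K1 - invmx K2), (invmx K1 - invmx K2)^T = invmx K1 - invmx K2,
      psdf (F1 - F2) & (F1 - F2)^T = F1 - F2].
Proof.
move=> sP pP s1 s2 p12 pK1 K1 K2 F1 F2.
have uP : P \in unitmx by apply: pd_unit.
have e12 : forall v, bf K2 v v = bf K1 v v + bf (Phi1 - Phi2) (L *m v) (L *m v).
  move=> v; rewrite /K1 /K2 !bfBm !bf_cong; lra.
have pK2 : pdf K2 by move=> v nz; rewrite e12; have := pK1 v nz; have := p12 (L *m v); lra.
have uK1 : K1 \in unitmx by apply: pd_unit.
have uK2 : K2 \in unitmx by apply: pd_unit.
have sK1 : K1^T = K1 by apply: Kdef_sym.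
have sK2 : K2^T = K2 by apply: Kdef_sym.
have psK1 := pdf_psdf pK1.
have psK2 := pdf_psdf pK2.
have sI1 := inv_sym sK1; have sI2 := inv_sym sK2.
split.
- move=> z; rewrite bfBm (var_eq sK2 uK2 z).
  have := var_le sK1 uK1 psK1 z (invmx K2 *m z).
  have := e12 (invmx K2 *m z); have := p12 (L *m (invmx K2 *m z)); lra.
- by rewrite linearB /= sI1 sI2.
- rewrite /F1 /F2 !Fform //; move=> x; rewrite bfBm !bfDm !bf_cong.
  set u1 := L^T *m Phi1 *m x; set u2 := L^T *m Phi2 *m x.
  rewrite (var_eq sK2 uK2 u2).
  set y := invmx K2 *m u2.
  have := var_le sK1 uK1 psK1 u1 y.
  have := @identE _ _ _ L P _ x y s1; have := @identE _ _ _ L P _ x y s2.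
  rewrite -/K1 -/K2 -/u1 -/u2.
  have := p12 (x + L *m y); rewrite bfBm; lra.
- rewrite /F1 /F2 !Fform // linearB !linearD /= s1 s2.
  by rewrite (sym_cong _ sI1) (sym_cong _ sI2).
Qed.

Lemma Gbound (R : realType) a b (L : 'M[R]_(a,b)) (P : 'M[R]_b) (lam : R) :
  P^T = P -> pdf P -> 0 <= lam ->
  (forall w, bf (L *m invmx P *m L^T) w w <= lam * bf 1%:M w w) ->
  forall x, bf 1%:M (L *m x) (L *m x) <= lam * bf P x x.
Proof.
move=> sP pP l0 hM x.
have [->|nz] := eqVneq x 0; first by rewrite mulmx0 !bf0l mulr0.
have uP : P \in unitmx by apply: pd_unit.
have al := pP x nz; set al' := bf P x x in al *.
set be := bf 1%:M (L *m x) (L *m x).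
set t := be / al'.
have tal : t * al' = be by rewrite /t mulfVK // gt_eqF.
have := var_le sP uP (pdf_psdf pP) (L^T *m (L *m x)) (t *: x).
rewrite -bf_cong trmxK bfZl !bfZr bfZl -/al'.
have -> : bf 1%:M x (L^T *m (L *m x)) = be.
  by rewrite /be bf_mulr mul1mx bf_mull mulmx1.
have := hM (L *m x); rewrite -/be => h1 h2.
have h3 : t * be <= lam * be.
  have : t * (t * al') = t * be by rewrite tal.
  lra.
have be0 : 0 <= be by apply: bf1_ge0.
have [be00|bep] := eqVneq be 0.
  by rewrite be00 mulr_ge0 // ltW.
have bep' : 0 < be by rewrite lt_neqAle eq_sym bep be0.
have : t <= lam by rewrite -(ler_pM2r bep').
rewrite -tal => h4; rewrite ler_pM2r //.
Qed.
Lemma bf0m (R : realType) a c (x : 'cV[R]_a) (y : 'cV[R]_c) : bf 0 x y = 0.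
Proof. by rewrite /bf mulmx0 mul0mx mxE. Qed.

Lemma bf1_eq0 (R : realType) a (x : 'cV[R]_a) : bf 1%:M x x <= 0 -> x = 0.
Proof.
move=> h; apply/eqP; apply: contraTT h => nz; rewrite -ltNge; exact: bf1_gt0.
Qed.

Theorem lemma2 (R : realType) (n m p N : nat)
  (A : 'M[R]_n) (B : 'M[R]_(n, m)) (C : 'M[R]_(p, n)) (D : 'M[R]_p)
  (Phi1 Phi2 : 'M[R]_(N * n)) :
  (0 < n)%N -> (0 < m)%N -> (0 < p)%N -> (0 < N)%N ->
  pdmx (D *m D^T) ->
  Phi1^T = Phi1 -> Phi2^T = Phi2 ->
  loewner_le 0 Phi2 -> loewner_le Phi2 Phi1 ->
  loewner_lt_bar Phi1 (phitN N A B C D) ->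
  loewner_le (OmegaPhi A B C D Phi1) (OmegaPhi A B C D Phi2) /\
  loewner_le (WPhi A B C D Phi2) (WPhi A B C D Phi1).
Proof.
move=> n0 m0 p0 N0 _ s1 s2 l02 l21 hlt.
have k0 : (0 < N * n)%N by rewrite muln_gt0 N0 n0.
have sDD : (DDinv N D)^T = DDinv N D.
  by rewrite /DDinv inv_sym // trmx_mul trmxK.
have pDD : psdf (DDinv N D).
  apply: psdf_inv; first by rewrite trmx_mul trmxK.
  move=> v; have -> : DN N D *m (DN N D)^T = ((DN N D)^T)^T *m 1%:M *m (DN N D)^T.
    by rewrite trmxK mulmx1.
  by rewrite bf_cong bf1_ge0.
have sP : (PN N A B C D)^T = PN N A B C D.
  by rewrite /PN linearD /= trmx1 sym_cong.
have pP : pdf (PN N A B C D).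
  move=> v nz; rewrite /PN bfDm bf_cong.
  by have := bf1_gt0 nz; have := pDD (HN N A B C *m v); lra.
have p12 : psdf (Phi1 - Phi2) by case: l21.
have p2 : psdf Phi2 by move=> v; case: l02 => _ /(_ v); rewrite subr0.
have p1 : psdf Phi1 by move=> v; have := p12 v; have := p2 v; rewrite bfBm; lra.
have sM : (MN N A B C D)^T = MN N A B C D.
  have := sym_cong (LN N A B)^T (inv_sym sP); rewrite trmxK => h.
  by rewrite /MN h.
have pK1 : pdf (PN N A B C D - (LN N A B)^T *m Phi1 *m LN N A B).
  move=> v nz; rewrite bfBm bf_cong; have := pP v nz.
  rewrite /phitN in hlt; case: ifP hlt => [/eqP M0 _ | /negbT Mn0 hlt].
    have hM : forall w, bf (LN N A B *m invmx (PN N A B C D) *m (LN N A B)^T) w w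
        <= 0 * bf 1%:M w w.
      by move=> w; rewrite mul0r; have := M0; rewrite /MN => ->; rewrite bf0m.
    have := Gbound sP pP (lexx 0) hM v; rewrite mul0r => /bf1_eq0 ->.
    by rewrite bf0l subr0 => h.
  move: hlt => /= hlt.
  set lam := lambda1 (MN N A B C D) in hlt *.
  have hq : forall x, x != 0 -> bf Phi1 x x < lam^-1 * bf 1%:M x x.
    move=> x xnz; case: hlt => _ /(_ x xnz) h.
    have : 0 < bf (lam^-1%:M - Phi1) x x := h.
    rewrite bfBm bf_scal; lra.
  have lam0 : 0 < lam.
    pose x1 : 'cV[R]_(N * n) := const_mx 1.
    have x1nz : x1 != 0.
      apply/negP => /eqP/matrixP/(_ (Ordinal k0) 0); rewrite !mxE => /eqP.
      by rewrite oner_eq0.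
    have := hq x1 x1nz; have := p1 x1; have := bf1_gt0 x1nz.
    set s := bf 1%:M x1 x1; set b := bf Phi1 x1 x1 => hs hb hbs.
    have : 0 < lam^-1 * s by lra.
    by rewrite pmulr_lgt0 // invr_gt0.
  have hM : forall w, bf (LN N A B *m invmx (PN N A B C D) *m (LN N A B)^T) w w
      <= lam * bf 1%:M w w := spec_bound k0 sM.
  have hG := Gbound sP pP (ltW lam0) hM v.
  set w := LN N A B *m v in hG *.
  have [->|wnz] := eqVneq w 0; first by rewrite bf0l subr0 => h.
  have h1 := hq w wnz.
  have cl : lam^-1 * lam = 1 by rewrite mulVf // gt_eqF.
  have : lam^-1 * bf 1%:M w w <= lam^-1 * (lam * bf (PN N A B C D) v v).
    by rewrite ler_wpM2l // ltW // invr_gt0.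
  rewrite mulrA cl mul1r; lra.
have [pW sW pF sF] := core sP pP s1 s2 p12 pK1.
split.
- rewrite /loewner_le /OmegaPhi /SinvPhi /MN.
  rewrite !mulmxN !mulNmx opprD opprK addrACA subrr add0r addrC.
  rewrite -mulmxBl -mulmxBr.
  split; [exact: sym_cong | exact: psdf_cong].
- rewrite /loewner_le /WPhi /QPhi.
  rewrite -mulmxBl -mulmxBr -{1}(trmxK (RN N A B)).
  split; [exact: sym_cong | exact: psdf_cong].
Qed.
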